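(* Let $n\ge 1$ be an integer and consider the encrypted-cloning encoded state $\rho_{\mathrm{enc}}^{(n)}$ on the qubits $A,S_1,N_1,\dots,S_n,N_n$ (defined in the context). Let $\mathcal R_n=\{S_1,N_1,\dots,S_n,N_n\}$ be the storage register. Any subset $B\subset \mathcal R_n$ that misses a complete pair, i.e. such that $S_j\notin B$ and $N_j\notin B$ for some $j\in\{1,\dots,n\}$, is completely non-informative: the reduced state $\rho_B(\psi)$, obtained from $\rho_{\mathrm{enc}}^{(n)}$ by tracing out $A$ and all qubits of $\mathcal R_n\setminus B$, does not depend on the input state $\ket{\psi}$.
   Context: Pauli operators: $\sigma_0=I,\sigma_1=X,\sigma_2=Y,\sigma_3=Z$. An input qubit $A$ is prepared in an arbitrary pure state $\ket{\psi}_A$. For $i=1,\dots,n$, the signal qubit $S_i$ and noise qubit $N_i$ are prepared in the Bell state $\ket{\phi}_{S_iN_i}=\frac{1}{\sqrt2}(\ket{00}+\ket{11})$. Set $\alpha_0=1$, $\alpha_1=\alpha_3=i$, $\alpha_2=-i^{\,n+1}$, and define the unitary $U_{\mathrm{enc}}^{(n)}=\frac12\sum_{\mu=0}^3\alpha_\mu^{-1}\sigma_\mu^{(A)}\otimes\bigotimes_{i=1}^n\sigma_\mu^{(S_i)}$ (acting as identity on the $N_i$). The encoded state is $\ket{\Psi_{\mathrm{enc}}}=U_{\mathrm{enc}}^{(n)}\big[\ket{\psi}_A\otimes\bigotimes_{i=1}^n\ket{\phi}_{S_iN_i}\big]$ and $\rho_{\mathrm{enc}}^{(n)}=\ket{\Psi_{\mathrm{enc}}}\bra{\Psi_{\mathrm{enc}}}$.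 A subset $B$ of the storage register is called completely non-informative (completely uninformative) if its reduced state $\rho_B(\psi)$ is independent of $\ket{\psi}$. *)

(* Defs.v *)
From mathcomp Require Import all_boot all_order all_algebra.
Set Implicit Arguments. Unset Strict Implicit. Unset Printing Implicit Defensive.
Import Order.TTheory GRing.Theory Num.Theory.
Local Open Scope ring_scope.

(* Qubit labels: None = A, Some (j,false) = S_{j+1}, Some (j,true) = N_{j+1}. *)
Notation qubit n := (option ('I_n * bool)%type).
Definition qA (n : nat) : qubit n := None.
Definition qS (n : nat) (j : 'I_n) : qubit n := Some (j, false).
Definition qN (n : nat) (j : 'I_n) : qubit n := Some (j, true).

(* Computational basis states of the whole system A,S_1,N_1,...,S_n,N_n
   (false = |0>, true = |1>). *)
Notation config n := {ffun qubit n -> bool}.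

(* Pauli matrices sigma_mu, entry (row a, column b). *)
Definition pauli (C : numClosedFieldType) (mu : 'I_4) (a b : bool) : C :=
  match nat_of_ord mu with
  | 0 => (a == b)%:R
  | 1 => (a != b)%:R
  | 2 => if a == b then 0 else if a then 'i else - 'i
  | _ => if a == b then (if a then -1 else 1) else 0
  end.

Definition alpha (C : numClosedFieldType) (n : nat) (mu : 'I_4) : C :=
  match nat_of_ord mu with
  | 0 => 1
  | 2 => - 'i ^+ n.+1
  | _ => 'i
  end.

(* Single-site factor of sigma_mu^(A) (x) (x)_i sigma_mu^(S_i), identity on N_i. *)
Definition site_op (C : numClosedFieldType) (n : nat) (mu : 'I_4)
  (q : qubit n) (a b : bool) : C :=
  if q is Some (_, true) then (a == b)%:R else pauli C mu a b.

Definition Uenc (C : numClosedFieldType) (n : nat) (x y : config n) : C :=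
  2^-1 * \sum_(mu < 4) (alpha C n mu)^-1 *
           \prod_(q : qubit n) site_op C mu q (x q) (y q).

(* |psi>_A (x) (x)_i |phi>_{S_i N_i}, with |psi> = psi false |0> + psi true |1>. *)
Definition init_state (C : numClosedFieldType) (n : nat) (psi : bool -> C)
  (y : config n) : C :=
  psi (y (qA n)) * \prod_(j < n) ((y (qS j) == y (qN j))%:R / sqrtC 2).

Definition enc_state (C : numClosedFieldType) (n : nat) (psi : bool -> C)
  (x : config n) : C :=
  \sum_(y : config n) Uenc C x y * init_state psi y.

Definition rho_enc (C : numClosedFieldType) (n : nat) (psi : bool -> C)
  (x y : config n) : C :=
  enc_state psi x * (enc_state psi y)^*.

Definition merge (n : nat) (B : {set qubit n}) (x z : config n) : config n :=
  [ffun q => if q \in B then x q else z q].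

(* Entry (x,y) is <x_B| rho_B |y_B>; it depends only on x, y restricted to B;
   the sum runs over each configuration z of the complement exactly once. *)
Definition reduced (C : numClosedFieldType) (n : nat) (B : {set qubit n})
  (rho : config n -> config n -> C) (x y : config n) : C :=
  \sum_(z : config n | [forall q in B, ~~ z q]) rho (merge B x z) (merge B y z).

(* Main.v *)
Set Warnings "-notation-overridden,-ambiguous-paths".
Require Import Defs.
From mathcomp Require Import all_boot all_order all_algebra ring.

Set Implicit Arguments. Unset Strict Implicit. Unset Printing Implicit Defensive.
Import Order.TTheory GRing.Theory Num.Theory.
Local Open Scope ring_scope.

Definition flip (mu : 'I_4) (b : bool) :=
  if (val mu == 1%N) || (val mu == 2%N) then ~~ b else b.
Definition tmq {n} (mu : 'I_4) (q : qubit n) (b : bool) :=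
  if q is Some (_, true) then b else flip mu b.
Definition Tm {n} (mu : 'I_4) (w : config n) : config n := [ffun q => tmq mu q (w q)].

Lemma site0 (C : numClosedFieldType) n mu (q : qubit n) a b :
  b != tmq mu q a -> site_op C mu q a b = 0.
Proof.
rewrite /site_op /tmq /pauli /flip.
case: q => [[j []]|] /=.
- by case: a; case: b.
- case: mu => -[|[|[|k]]] Hk /=; by case: a; case: b.
- case: mu => -[|[|[|k]]] Hk /=; by case: a; case: b.
Qed.

Lemma collapse (C : numClosedFieldType) n mu (v : config n) (G : config n -> C) :
  \sum_(y : config n) (\prod_(q : qubit n) site_op C mu q (v q) (y q)) * G y =
  (\prod_(q : qubit n) site_op C mu q (v q) (Tm mu v q)) * G (Tm mu v).
Proof.
rewrite (bigD1 (Tm mu v)) //= [X in _ + X]big1 ?addr0 // => y Hy.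
case: (pickP [pred q | y q != Tm mu v q]) => [q /= Hq|H].
  by rewrite (bigD1 q) //= site0 ?mul0r ?mul0r //; rewrite ffunE in Hq.
by case/eqP: Hy; apply/ffunP => q; move: (H q) => /= /negbFE/eqP.
Qed.

Lemma enc_formula (C : numClosedFieldType) n (psi : bool -> C) (v : config n) :
  enc_state psi v = \sum_(mu < 4) 2^-1 * (alpha C n mu)^-1 *
    ((\prod_(q : qubit n) site_op C mu q (v q) (Tm mu v q)) * init_state psi (Tm mu v)).
Proof.
rewrite /enc_state /Uenc.
under eq_bigr => y _ do rewrite mulr_sumr mulr_suml.
rewrite exchange_big; apply: eq_bigr => mu _.
rewrite -collapse mulr_sumr; apply: eq_bigr => y _.
by rewrite !mulrA.
Qed.

Definition setq {n} (z : config n) (q : qubit n) (b : bool) : config n :=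
  [ffun q' => if q' == q then b else z q'].
Definition upd {n} (j : 'I_n) (z : config n) (a s t : bool) : config n :=
  setq (setq (setq z (qN j) t) (qS j) s) (qA n) a.

Lemma upd_val n (j : 'I_n) z a s t q :
  upd j z a s t q = if q == qA n then a else if q == qS j then s
                    else if q == qN j then t else z q.
Proof. by rewrite !ffunE. Qed.

Lemma qSA n (j : 'I_n) : (qS j == qA n) = false. Proof. by []. Qed.
Lemma qAS n (j : 'I_n) : (qA n == qS j) = false. Proof. by []. Qed.
Lemma qAN n (j : 'I_n) : (qA n == qN j) = false. Proof. by []. Qed.
Lemma qNA n (j : 'I_n) : (qN j == qA n) = false. Proof. by []. Qed.
Lemma qSN n (j j' : 'I_n) : (qS j' == qN j) = false.
Proof. by rewrite /qS /qN -[_ == _]/((j',false) == (j,true)) xpair_eqE andbF. Qed.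
Lemma qNS n (j j' : 'I_n) : (qN j' == qS j) = false.
Proof. by rewrite /qS /qN -[_ == _]/((j',true) == (j,false)) xpair_eqE andbF. Qed.
Lemma qSS n (j j' : 'I_n) : (qS j' == qS j) = (j' == j).
Proof. by rewrite /qS -[_ == _]/((j',false) == (j,false)) xpair_eqE andbT. Qed.
Lemma qNN n (j j' : 'I_n) : (qN j' == qN j) = (j' == j).
Proof. by rewrite /qN -[_ == _]/((j',true) == (j,true)) xpair_eqE andbT. Qed.

Definition beta (C : numClosedFieldType) n (j : 'I_n) (mu : 'I_4) (v : config n) : C :=
  2^-1 * (alpha C n mu)^-1 *
  ((\prod_(q | (q != qA n) && (q != qS j) && (q != qN j))
       site_op C mu q (v q) (tmq mu q (v q))) *
   (\prod_(j' | j' != j) ((flip mu (v (qS j')) == v (qN j'))%:R / sqrtC 2)) / sqrtC 2).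
Definition Xf (C : numClosedFieldType) (psi : bool -> C) (mu : 'I_4) (a : bool) : C :=
  pauli C mu a (flip mu a) * psi (flip mu a).
Definition cf (C : numClosedFieldType) (mu : 'I_4) (s t : bool) : C :=
  pauli C mu s (flip mu s) * (flip mu s == t)%:R.

Lemma enc_upd (C : numClosedFieldType) n (j : 'I_n) (psi : bool -> C) v a s t :
  enc_state psi (upd j v a s t) =
  \sum_(mu < 4) beta C j mu v * (Xf psi mu a * cf C mu s t).
Proof.
rewrite enc_formula; apply: eq_bigr => mu _.
rewrite /init_state /beta /Xf /cf.
rewrite (bigD1 (qA n)) //= (bigD1 (qS j)) //= (bigD1 (qN j)) /=; last first.
  by rewrite qNS.
rewrite (bigD1 j) //=.
rewrite !ffunE !eqxx qSA qNA qNS /=.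
have -> : \prod_(i : qubit n | (i != qA n) && (i != qS j) && (i != qN j))
        site_op C mu i (upd j v a s t i) (Tm mu (upd j v a s t) i) =
   \prod_(i : qubit n | (i != qA n) && (i != qS j) && (i != qN j))
        site_op C mu i (v i) (tmq mu i (v i)).
  apply: eq_bigr => q /andP[/andP[HA HS] HN].
  by rewrite [Tm _ _ _]ffunE upd_val (negbTE HA) (negbTE HS) (negbTE HN).
have -> : \prod_(i < n | i != j)
        ((Tm mu (upd j v a s t) (qS i) == Tm mu (upd j v a s t) (qN i))%:R / sqrtC 2 : C) =
   \prod_(i < n | i != j) ((flip mu (v (qS i)) == v (qN i))%:R / sqrtC 2).
  apply: eq_bigr => j' Hj.
  by rewrite !ffunE qSA qNA qSS qNS qSN qNN (negbTE Hj).
ring.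
Qed.

Lemma split1 (C : numClosedFieldType) n (P : pred (config n)) (q : qubit n)
  (F : config n -> C) :
  (forall z b, P (setq z q b) = P z) ->
  \sum_(z | P z) F z = \sum_(z | P z && ~~ z q) \sum_(b : bool) F (setq z q b).
Proof.
move=> HP.
have togK : cancel (fun z => setq z q (~~ z q)) (fun z => setq z q (~~ z q)).
  move=> z; apply/ffunP => q'; rewrite !ffunE.
  by case: (q' =P q) => // ->; rewrite eqxx negbK.
rewrite [LHS](bigID (fun z : config n => z q)) /=.
under [RHS]eq_bigr => z _ do rewrite big_bool.
rewrite big_split /=; congr (_ + _).
  rewrite (reindex_inj (can_inj togK)); apply: eq_big => z.
    by rewrite HP ffunE eqxx.
  by move=> /andP[_]; rewrite ffunE eqxx => ->.
apply: eq_bigr => z /andP[_ Hz]; congr F; apply/ffunP => q'; rewrite ffunE.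
by case: (q' =P q) => // ->; rewrite (negbTE Hz).
Qed.

Lemma forall_setq n (B : {set qubit n}) (z : config n) q b :
  q \notin B ->
  [forall q' in B, ~~ setq z q b q'] = [forall q' in B, ~~ z q'].
Proof.
move=> Hq; apply: eq_forallb => q'; rewrite ffunE.
by case: (q' =P q) => // ->; rewrite (negbTE Hq).
Qed.

Lemma decomp (C : numClosedFieldType) n (j : 'I_n) (B : {set qubit n})
  (F : config n -> C) :
  qA n \notin B -> qS j \notin B -> qN j \notin B ->
  \sum_(z : config n | [forall q in B, ~~ z q]) F z =
  \sum_(z : config n | [forall q in B, ~~ z q] && ~~ z (qA n) && ~~ z (qS j) && ~~ z (qN j))
     \sum_(t : bool) \sum_(s : bool) \sum_(a : bool) F (upd j z a s t).
Proof.
move=> HA HS HN.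
rewrite (@split1 C n _ (qA n)); last by move=> z b; rewrite forall_setq.
rewrite (@split1 C n _ (qS j)); last first.
  by move=> z b; rewrite forall_setq // ffunE qAS.
rewrite (@split1 C n _ (qN j)); last first.
  by move=> z b; rewrite forall_setq // !ffunE qAN qSN.
by [].
Qed.

Lemma cM (C : numClosedFieldType) (x y : C) : (x * y)^* = x^* * y^*.
Proof. exact: rmorphM. Qed.
Lemma cN (C : numClosedFieldType) (x : C) : (- x)^* = - x^*.
Proof. exact: rmorphN. Qed.
Lemma c1 (C : numClosedFieldType) : (1 : C)^* = 1.
Proof. exact: rmorph1. Qed.
Lemma c0 (C : numClosedFieldType) : (0 : C)^* = 0.
Proof. exact: rmorph0. Qed.
Lemma mulii (C : numClosedFieldType) : 'i * 'i = -1 :> C.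
Proof. by rewrite -expr2 sqrCi. Qed.

Lemma orth (C : numClosedFieldType) (mu nu : 'I_4) :
  \sum_(t : bool) \sum_(s : bool) cf C mu s t * (cf C nu s t)^* = 2 * (mu == nu)%:R.
Proof.
case: mu => -[|[|[|[|k]]]] Hm //; case: nu => -[|[|[|[|l]]]] Hn //=;
rewrite /cf /pauli /flip /= !big_bool /= ?rmorphM ?rmorphN ?rmorph1 ?rmorph0 ?conjCi.
all: try ring.
have E : Num.Num_conj__canonical__GRing_RMorphism C 'i = 'i^* by [].
rewrite E conjCi; rewrite !mulr1 !mulr0 ?mul0r !addr0 ?add0r.
by rewrite opprK mulNr mulrN -expr2 sqrCi; ring.
Qed.

Lemma normX (C : numClosedFieldType) (psi : bool -> C) (mu : 'I_4) :
  \sum_(a : bool) Xf psi mu a * (Xf psi mu a)^* = \sum_(b : bool) psi b * (psi b)^*.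
Proof.
case: mu => -[|[|[|[|k]]]] Hm //;
rewrite /Xf /pauli /flip /= !big_bool /= ?cM ?cN ?c1 ?c0.
all: try ring.
rewrite conjCi.
transitivity (- ('i * 'i) * (psi true * (psi true)^* + psi false * (psi false)^*)).
  ring.
by rewrite mulii opprK mul1r.
Qed.

Lemma cSum (C : numClosedFieldType) (I : finType) (F : I -> C) :
  (\sum_(i : I) F i)^* = \sum_(i : I) (F i)^*.
Proof. exact: rmorph_sum. Qed.

Lemma swap3 (C : numClosedFieldType) (I J K : finType) (F : I -> J -> K -> C) :
  \sum_(i : I) \sum_(j : J) \sum_(k : K) F i j k =
  \sum_(j : J) \sum_(k : K) \sum_(i : I) F i j k.
Proof.
rewrite exchange_big; apply: eq_bigr => j _; exact: exchange_big.
Qed.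

Lemma local_sum (C : numClosedFieldType) (be be' : 'I_4 -> C) (psi : bool -> C) :
  \sum_(t : bool) \sum_(s : bool) \sum_(a : bool)
    (\sum_(mu < 4) be mu * (Xf psi mu a * cf C mu s t)) *
    (\sum_(nu < 4) be' nu * (Xf psi nu a * cf C nu s t))^* =
  2 * (\sum_(b : bool) psi b * (psi b)^*) * \sum_(mu < 4) be mu * (be' mu)^*.
Proof.
transitivity (\sum_(t : bool) \sum_(s : bool) \sum_(a : bool) \sum_(mu < 4) \sum_(nu < 4)
   be mu * (be' nu)^* * (Xf psi mu a * (Xf psi nu a)^*) * (cf C mu s t * (cf C nu s t)^*)).
  apply: eq_bigr => t _; apply: eq_bigr => s _; apply: eq_bigr => a _.
  rewrite cSum mulr_suml; apply: eq_bigr => mu _.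
  rewrite mulr_sumr; apply: eq_bigr => nu _; rewrite !cM; ring.
under eq_bigr => t _ do under eq_bigr => s _ do rewrite swap3.
under eq_bigr => t _ do rewrite swap3.
rewrite swap3 mulr_sumr; apply: eq_bigr => mu _.
transitivity (\sum_(nu < 4) be mu * (be' nu)^* * (\sum_(a : bool) Xf psi mu a * (Xf psi nu a)^*)
   * (\sum_(t : bool) \sum_(s : bool) cf C mu s t * (cf C nu s t)^*)).
  by apply: eq_bigr => nu _; rewrite !big_bool /=; ring.
under eq_bigr => nu _ do rewrite orth.
rewrite (bigD1 mu) //= [X in _ + X]big1 ?addr0 => [|nu Hnu].
  by rewrite eqxx normX /=; ring.
by rewrite (eq_sym mu) (negbTE Hnu) /= !mulr0.
Qed.

Lemma merge_upd n (j : 'I_n) (B : {set qubit n}) (x z : config n) a s t :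
  qA n \notin B -> qS j \notin B -> qN j \notin B ->
  Defs.merge B x (upd j z a s t) = upd j (Defs.merge B x z) a s t.
Proof.
move=> HA HS HN; apply/ffunP => q; rewrite /merge /upd /setq !ffunE.
case: (boolP (q \in B)) => HqB.
  have -> : (q == qA n) = false by apply/negbTE; apply: contraNneq HA => <-.
  have -> : (q == qS j) = false by apply/negbTE; apply: contraNneq HS => <-.
  by have -> : (q == qN j) = false by apply/negbTE; apply: contraNneq HN => <-.
by [].
Qed.

Theorem proposition1 (C : numClosedFieldType) (n : nat) (B : {set qubit n}) :
  (0 < n)%N ->
  qA n \notin B ->
  (exists j : 'I_n, qS j \notin B /\ qN j \notin B) ->
  forall psi1 psi2 : bool -> C,
    \sum_(b : bool) psi1 b * (psi1 b)^* = 1 ->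
    \sum_(b : bool) psi2 b * (psi2 b)^* = 1 ->
    forall x y : config n,
      reduced B (rho_enc psi1) x y = reduced B (rho_enc psi2) x y.
Proof.
move=> _ HA [j [HS HN]] psi1 psi2 N1 N2 x y.
rewrite /reduced (decomp _ HA HS HN) (decomp _ HA HS HN).
apply: eq_bigr => z _.
have key : forall psi : bool -> C,
  \sum_(t : bool) \sum_(s : bool) \sum_(a : bool)
     rho_enc psi (Defs.merge B x (upd j z a s t)) (Defs.merge B y (upd j z a s t)) =
  2 * (\sum_(b : bool) psi b * (psi b)^*) *
    \sum_(mu < 4) beta C j mu (Defs.merge B x z) * (beta C j mu (Defs.merge B y z))^*.
  move=> psi; rewrite -local_sum.
  apply: eq_bigr => t _; apply: eq_bigr => s _; apply: eq_bigr => a _.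
  by rewrite /rho_enc !merge_upd // !enc_upd.
by rewrite !key N1 N2.
Qed.
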